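(* Let $\mathcal L$ be a BQD, and let $\mathcal M_{\mathcal L}$ be its shape algebra. Then, as $\mathbb N^2$-graded vector spaces, $$\mathcal M_{\mathcal L}\cong (TV\otimes TW)/I',$$ where $$I'=TV\otimes \operatorname{Im}a\otimes TV\otimes TW+TV\otimes\operatorname{Im}c\otimes TW+TV\otimes TW\otimes\operatorname{Im}b\otimes TW$$ (here $TV\otimes TW$ is graded with $V$ in degree $(1,0)$ and $W$ in degree $(0,1)$).
   Context: All vector spaces over $\mathbb C$; $TX$ is the tensor algebra of $X$; $\alpha\otimes\beta$ is the tensor product of linear maps, $1_X$ the identity; $\mathbb C\otimes X\cong X\cong X\otimes \mathbb C$, and a map $\mathbb C\to X$ is identified with a vector of $X$. A basic quantum $\mathrm{SL}(3)$ datum (BQD) $\mathcal L$ consists of $3$-dimensional vector spaces $V,W$, linear maps $A:V\otimes V\to W$, $a:W\to V\otimes V$, $B:W\otimes W\to V$, $b:V\to W\otimes W$, $C:W\otimes V\to\mathbb C$, $c:\mathbb C\to V\otimes W$, $D:V\otimes W\to\mathbb C$, $d:\mathbb C\to W\otimes V$, and scalars $q,\omega$ with $q\neq0$, $q^2\neq-1$, $\omega^3=1$, such that, with $\kappa=q^{-2}+1+q^2$, $\rho=(q+q^{-1})^{-2}$: $(1_V\otimes C)(c\otimes 1_V)=1_V$; $(D\otimes 1_V)(1_V\otimes d)=1_V$; $Aa=1_W$; $C(A\otimes 1_V)=\omega D(1_V\otimes A)$; $(1_V\otimes a)c=\omega(a\otimes 1_V)d$; $(1_V\otimes D)(a\otimes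 1_W)=B$; $\omega^2(1_W\otimes A)(d\otimes 1_V)=b$; $\omega(C\otimes 1_V)(1_W\otimes a)=B$; $(A\otimes 1_W)(1_V\otimes c)=b$; $Dc=\kappa$; $Cd=\kappa$; $(1_V\otimes A)(a\otimes 1_V)(A\otimes 1_V)(1_V\otimes a)=\rho(1_{V\otimes W}+cD)$; $(A\otimes 1_V)(1_V\otimes a)(1_V\otimes A)(a\otimes 1_V)=\rho(1_{W\otimes V}+dC)$; and either $q^2=1$ or $q^2$ is not a root of unity. Let $G:=(1_V\otimes A)(a\otimes 1_V):W\otimes V\to V\otimes W$. The shape algebra is $\mathcal M_{\mathcal L}:=T(V\oplus W)/I$, where $I$ is the two-sided ideal generated by $\operatorname{Im}a\subset V\otimes V$, $\operatorname{Im}b\subset W\otimes W$, $\operatorname{Im}c\subset V\otimes W$ and all elements $w\otimes v+(q+q^{-1})G(w\otimes v)$ ($v\in V$, $w\in W$); it is $\mathbb N^2$-graded with $V$ in degree $(1,0)$ and $W$ in degree $(0,1)$. *)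

(* Defs.v *)
(* Scalars: C modelled as R[i] (complex numbers over a realType R). *)
From mathcomp Require Import all_boot all_order all_algebra.
From mathcomp Require Import reals complex.
Set Implicit Arguments. Unset Strict Implicit. Unset Printing Implicit Defensive.
Import GRing.Theory Num.Theory.
Local Open Scope ring_scope.

(* Both V and W are 3-dimensional; we fix bases (v_0,v_1,v_2) of V and
   (w_0,w_1,w_2) of W and describe all structure maps by their coordinates:
     A (v_i (x) v_j) = sum_k A i j k w_k        a w_k = sum_{i,j} a k i j v_i (x) v_j
     B (w_i (x) w_j) = sum_k B i j k v_k        b v_k = sum_{i,j} b k i j w_i (x) w_j
     C (w_j (x) v_i) = C j i                    c 1   = sum_{i,j} c i j v_i (x) w_j
     D (v_i (x) w_j) = D i j                    d 1   = sum_{j,i} d j i w_j (x) v_i   *)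

Definition ix := 'I_3.

Section BQDdef.
Variable K : fieldType.

Definition kron (i j : ix) : K := (i == j)%:R.

Record BQD := MkBQD {
  bq_q : K; bq_om : K;
  bq_A : ix -> ix -> ix -> K; bq_a : ix -> ix -> ix -> K;
  bq_B : ix -> ix -> ix -> K; bq_b : ix -> ix -> ix -> K;
  bq_C : ix -> ix -> K; bq_c : ix -> ix -> K;
  bq_D : ix -> ix -> K; bq_d : ix -> ix -> K;
  bq_q_neq0 : bq_q != 0;
  bq_q2_neqN1 : bq_q ^+ 2 != -1;
  bq_om3 : bq_om ^+ 3 = 1;
  (* (1_V (x) C)(c (x) 1_V) = 1_V *)
  bq_ax1 : forall i l, \sum_j bq_c i j * bq_C j l = kron i l;
  (* (D (x) 1_V)(1_V (x) d) = 1_V *)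
  bq_ax2 : forall l i, \sum_j bq_D l j * bq_d j i = kron l i;
  (* A a = 1_W *)
  bq_ax3 : forall k l, \sum_i \sum_j bq_a k i j * bq_A i j l = kron k l;
  (* C (A (x) 1_V) = om D (1_V (x) A) *)
  bq_ax4 : forall i j l, \sum_k bq_A i j k * bq_C k l
                         = bq_om * \sum_k bq_A j l k * bq_D i k;
  (* (1_V (x) a) c = om (a (x) 1_V) d *)
  bq_ax5 : forall i p r, \sum_j bq_c i j * bq_a j p r
                         = bq_om * \sum_j bq_d j r * bq_a j i p;
  (* (1_V (x) D)(a (x) 1_W) = B *)
  bq_ax6 : forall k l i, bq_B k l i = \sum_j bq_a k i j * bq_D j l;
  (* om^2 (1_W (x) A)(d (x) 1_V) = b *)
  bq_ax7 : forall l j k, bq_b l j k = bq_om ^+ 2 * \sum_i bq_d j i * bq_A i l k;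
  (* om (C (x) 1_V)(1_W (x) a) = B *)
  bq_ax8 : forall k l j, bq_B k l j = bq_om * \sum_i bq_a l i j * bq_C k i;
  (* (A (x) 1_W)(1_V (x) c) = b *)
  bq_ax9 : forall l k j, bq_b l k j = \sum_i bq_c i j * bq_A l i k;
  (* D c = kappa *)
  bq_ax10 : \sum_i \sum_j bq_c i j * bq_D i j
            = bq_q ^-2 + 1 + bq_q ^+ 2;
  (* C d = kappa *)
  bq_ax11 : \sum_j \sum_i bq_d j i * bq_C j i
            = bq_q ^-2 + 1 + bq_q ^+ 2;
  (* (1_V (x) A)(a (x) 1_V)(A (x) 1_V)(1_V (x) a) = rho (1_{V(x)W} + c D),
     matrix entry from v_i (x) w_k to v_t (x) w_z *)
  bq_ax12 : forall i k t z,
     \sum_p \sum_r \sum_s \sum_u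
        bq_a k p r * bq_A i p s * bq_a s t u * bq_A u r z
     = (bq_q + bq_q^-1) ^- 2 * (kron i t * kron k z + bq_c t z * bq_D i k);
  (* (A (x) 1_V)(1_V (x) a)(1_V (x) A)(a (x) 1_V) = rho (1_{W(x)V} + d C),
     matrix entry from w_k (x) v_i to w_z (x) v_u *)
  bq_ax13 : forall k i z u,
     \sum_p \sum_r \sum_s \sum_t
        bq_a k p r * bq_A r i s * bq_a s t u * bq_A p t z
     = (bq_q + bq_q^-1) ^- 2 * (kron k z * kron i u + bq_d z u * bq_C k i);
  bq_root : bq_q ^+ 2 = 1 \/ (forall n : nat, (0 < n)%N -> (bq_q ^+ 2) ^+ n != 1)
}.

(* G = (1_V (x) A)(a (x) 1_V) : W (x) V -> V (x) W ;
   G (w_k (x) v_i) = sum_{p,s} bqG k i p s v_p (x) w_s *)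
Definition bqG (L : BQD) (k i p s : ix) : K :=
  \sum_r bq_a L k p r * bq_A L r i s.

(* A letter is a basis vector of V (+) W: (false, i) = v_i, (true, j) = w_j.
   The degree-k part (V (+) W)^{(x) k} has basis the words of length k.    *)
Definition letter := (bool * ix)%type.
Definition isV (x : letter) : bool := ~~ x.1.
Definition isW (x : letter) : bool := x.1.

Definition Tdeg (k : nat) := {ffun k.-tuple letter -> K^o}.

Definition basisT k (t : k.-tuple letter) : Tdeg k :=
  [ffun u => (u == t)%:R].

Definition elem2 (f : letter -> letter -> K) : Tdeg 2 :=
  [ffun t => f (tnth t ord0) (tnth t (@Ordinal 2 1 isT))].

Definition dflt : letter := (false, ord0).

(* e_s' (x) g (x) e_s'' where s' = first i letters of s, s'' = letters of s
   after position i+1 (the letters of s at positions i, i+1 are ignored).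
   Meaningful when i.+1 < k. *)
Definition placed k (s : k.-tuple letter) (i : nat) (g : Tdeg 2) : Tdeg k :=
  [ffun t : k.-tuple letter =>
     if [forall j : 'I_k, ((j != i :> nat) && (j != i.+1 :> nat))
                            ==> (tnth t j == tnth s j)]
     then g [tuple nth dflt t i; nth dflt t i.+1] else 0].

(* degree-k part of the two-sided ideal generated by degree-2 elements gs *)
Definition ideal_deg k (gs : seq (Tdeg 2)) : {vspace Tdeg k} :=
  <<flatten [seq [seq placed s i g | i <- iota 0 k.-1, g <- gs]
              | s <- enum [set: k.-tuple letter]]>>%VS.

(* bidegree (m,n) part of T(V (+) W), inside degree m+n *)
Definition Tbideg m n : {vspace Tdeg (m + n)} :=
  <<[seq basisT t | t : (m + n).-tuple letter <- enum [set: (m + n).-tuple letter] & count isV t == m]>>%VS.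

Variable L : BQD.

Definition gen_a (k : ix) : Tdeg 2 :=
  elem2 (fun x y => if isV x && isV y then bq_a L k x.2 y.2 else 0).
Definition gen_b (k : ix) : Tdeg 2 :=
  elem2 (fun x y => if isW x && isW y then bq_b L k x.2 y.2 else 0).
Definition gen_c : Tdeg 2 :=
  elem2 (fun x y => if isV x && isW y then bq_c L x.2 y.2 else 0).
(* w_k (x) v_i + (q + q^-1) G (w_k (x) v_i) *)
Definition gen_rel (k i : ix) : Tdeg 2 :=
  elem2 (fun x y =>
    if isW x && isV y then kron k x.2 * kron i y.2
    else if isV x && isW y then (bq_q L + (bq_q L)^-1) * bqG L k i x.2 y.2
    else 0).

Definition gens_a := [seq gen_a k | k <- enum [set: ix]].
Definition gens_b := [seq gen_b k | k <- enum [set: ix]].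
Definition gens_rel := [seq gen_rel k i | k <- enum [set: ix], i <- enum [set: ix]].

Definition idealI k : {vspace Tdeg k} :=
  ideal_deg k (gens_a ++ gens_b ++ gen_c :: gens_rel).

(* bidegree (m,n) part of the ideal I (I is bihomogeneous) *)
Definition idealI_bideg m n : {vspace Tdeg (m + n)} :=
  (idealI (m + n) :&: Tbideg m n)%VS.

(* (TV (x) TW)_(m,n) = V^{(x) m} (x) W^{(x) n}: words whose first m letters
   are in V and last n letters are in W *)
Definition VWword m n (t : (m + n).-tuple letter) : bool :=
  [forall j : 'I_(m + n), isW (tnth t j) == (m <= j)%N].

Definition TVTW m n : {vspace Tdeg (m + n)} :=
  <<[seq basisT t | t <- enum [set: (m + n).-tuple letter] & VWword t]>>%VS.

(* I'_(m,n) = (TV (x) Im a (x) TV (x) TW + TV (x) Im c (x) TW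
               + TV (x) TW (x) Im b (x) TW)_(m,n) *)
Definition idealI' m n : {vspace Tdeg (m + n)} :=
  (<<flatten [seq [seq placed s i g | i <- iota 0 m.-1, g <- gens_a]
              | s <- enum [set: (m + n).-tuple letter] & VWword s]>>
 + <<[seq placed s m.-1 gen_c | s <- enum [set: (m + n).-tuple letter]
                                & (0 < m)%N && (0 < n)%N && VWword s]>>
 + <<flatten [seq [seq placed s i g | i <- iota m n.-1, g <- gens_b]
              | s <- enum [set: (m + n).-tuple letter] & VWword s]>>)%VS.

End BQDdef.

(* f induces an isomorphism of vector spaces U1/J1 -> U2/J2
   (where J1 <= U1, J2 <= U2 are subspaces of the ambient spaces) *)
Definition induces_quot_iso (F : fieldType) (vT : vectType F)
    (U1 J1 U2 J2 : {vspace vT}) (f : 'End(vT)) : Prop :=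
  [/\ (f @: U1 <= U2)%VS,
      (f @: J1 <= J2)%VS,
      (forall x, x \in U1 -> f x \in J2 -> x \in J1) &
      (U2 <= f @: U1 + J2)%VS].

(* Main.v *)
From HB Require Import structures.
Require Import Defs.
From mathcomp Require Import all_boot all_order all_algebra.
From mathcomp Require Import reals complex.
From mathcomp Require Import zify ring.
Set Implicit Arguments. Unset Strict Implicit. Unset Printing Implicit Defensive.
Import GRing.Theory Num.Theory.
Local Open Scope ring_scope.

Section Words.
Variable k : nat.
Notation word := (k.-tuple letter).

Definition lt (t : word) (j : nat) : letter := nth dflt t j.

Definition upd (t : word) (j : nat) (x : letter) : word :=
  [tuple (if i == j :> nat then x else tnth t i) | i < k].

Lemma lt_upd t j x i : (j < k)%N -> lt (upd t j x) i = if i == j then x else lt t i.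
Proof.
move=> jk; rewrite /lt; case: (ltnP i k) => ik.
  change i with (nat_of_ord (Ordinal ik)); rewrite -!tnth_nth tnth_mktuple //.
rewrite !nth_default ?size_tuple //.
by case: eqP => // eij; move: jk; rewrite -eij ltnNge ik.
Qed.

Lemma eq_word (t t' : word) : (forall i, (i < k)%N -> lt t i = lt t' i) -> t = t'.
Proof.
move=> H; apply: eq_from_tnth => i; rewrite !(tnth_nth dflt); exact: H.
Qed.

Lemma upd_id t j : (j < k)%N -> upd t j (lt t j) = t.
Proof. by move=> jk; apply: eq_word => i _; rewrite lt_upd //; case: eqP => // ->. Qed.

Lemma upd_upd t j x y : (j < k)%N -> upd (upd t j x) j y = upd t j y.
Proof. by move=> jk; apply: eq_word => i _; rewrite !lt_upd //; case: eqP. Qed.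

Lemma upd_comm t j j' x y : (j < k)%N -> (j' < k)%N -> j != j' ->
  upd (upd t j x) j' y = upd (upd t j' y) j x.
Proof.
move=> jk jk' ne; apply: eq_word => i _; rewrite !lt_upd //.
case: (eqVneq i j) => [eij|]; case: (eqVneq i j') => // eij'.
by move: ne; rewrite -eij -eij' eqxx.
Qed.

Definition upd2 t j x y := upd (upd t j x) j.+1 y.

Definition isWV (t : word) (j : nat) : bool :=
  (j.+1 < k)%N && isW (lt t j) && isV (lt t j.+1).

Definition mu (t : word) : nat := (\sum_(i < k) isV (lt t i) * i)%N.

Lemma sum_delta (j c : nat) : (j < k)%N -> (\sum_(i < k) (i == j :> nat) * c)%N = c.
Proof.
move=> jk; rewrite (bigD1 (Ordinal jk)) //= eqxx mul1n big1 ?addn0 //.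
by move=> i; rewrite -val_eqE /= => /negbTE ->.
Qed.

Lemma mu_sw t j p s : isWV t j -> (mu (upd2 t j (false, p) (true, s))).+1 = mu t.
Proof.
case/andP => /andP [jk wj vj].
have jk0 : (j < k)%N by apply: ltnW.
have H : forall i : 'I_k, (isV (lt t i) * i + (i == j :> nat) * j =
   isV (lt (upd2 t j (false, p) (true, s)) i) * i + (i == j.+1 :> nat) * j.+1)%N.
  move=> i; rewrite /upd2 !lt_upd //.
  case: (eqVneq (i : nat) j.+1) => [e|ne1].
    rewrite e /= (gtn_eqF (ltnSn j)) /=; move: vj; rewrite /isV => ->.
    by rewrite /= ?mul1n ?mul0n ?add0n ?addn0.
  case: (eqVneq (i : nat) j) => [e|ne0].
    by rewrite e; move: wj; rewrite /isW /isV => ->; rewrite /= !mul0n !mul1n addn0.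
  by rewrite /= !mul0n !addn0.
have : (\sum_(i < k) (isV (lt t i) * i + (i == j :> nat) * j) =
   \sum_(i < k) (isV (lt (upd2 t j (false, p) (true, s)) i) * i + (i == j.+1 :> nat) * j.+1))%N.
  by apply: eq_bigr => i _; exact: H.
rewrite !big_split /= !sum_delta //.
move=> E; rewrite /mu; apply/eqP; rewrite -(eqn_add2r j) E addnS -addSn.
by [].
Qed.

Lemma WV_disj t j j0 : isWV t j -> isWV t j0 -> j != j0 -> (j.+1 < j0)%N || (j0.+1 < j)%N.
Proof.
case/andP=> /andP [_ wj vj] /andP [/andP [_ wj0 vj0]] ne.
have h1 : j0 != j.+1.
  by apply/eqP => e; move: vj wj0; rewrite -e /isV /isW => /negbTE ->.
have h2 : j != j0.+1.
  by apply/eqP => e; move: vj0 wj; rewrite -e /isV /isW => /negbTE ->.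
move: ne h1 h2; rewrite !neq_ltn; lia.
Qed.

End Words.

Section Phi.
Variable K : fieldType.
Variable L : BQD K.
Variable k : nat.
Notation word := (k.-tuple letter).
Notation T := (Tdeg K k).

Definition sc : K := - (bq_q L + (bq_q L)^-1).
Definition cf (t : word) j p s : K := sc * bqG L (lt t j).2 (lt t j.+1).2 p s.
Definition sw (t : word) j p s : word := upd2 t j (false, p) (true, s).

Fixpoint phiw (n : nat) (t : word) : T :=
  match n with
  | 0 => basisT K t
  | n'.+1 => if [pick j : 'I_k | isWV t j] is Some j then
               \sum_(p : ix) \sum_(s : ix) cf t j p s *: phiw n' (sw t j p s)
             else basisT K t
  end.

Lemma phiw_none n t : [pick j : 'I_k | isWV t j] = None -> phiw n t = basisT K t.
Proof. by case: n => //= n ->. Qed.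

Lemma mu_sw' t j p s p' s' : isWV t j -> mu (sw t j p s) = mu (sw t j p' s').
Proof. by move=> h; apply/eqP; rewrite -eqSS /sw !mu_sw. Qed.

Lemma phiw_mu n t : (mu t <= n)%N -> phiw n t = phiw (mu t) t.
Proof.
elim: n t => [|n IH] t.
  by rewrite leqn0 => /eqP ->.
move=> hle.
case E: [pick j : 'I_k | isWV t j] => [j|]; last by rewrite !phiw_none.
have wv : isWV t j by move: E; case: pickP => // x hx [<-].
have hm := mu_sw ord0 ord0 wv.
rewrite -hm /= E.
apply: eq_bigr => p _; apply: eq_bigr => s _.
rewrite IH; last by rewrite -ltnS (mu_sw p s wv).
by rewrite (mu_sw' p s ord0 ord0 wv).
Qed.

Definition phi t := phiw (mu t) t.

Lemma phi_none t : [pick j : 'I_k | isWV t j] = None -> phi t = basisT K t.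
Proof. exact: phiw_none. Qed.

Lemma phi_pick t j : [pick j : 'I_k | isWV t j] = Some j ->
  phi t = \sum_(p : ix) \sum_(s : ix) cf t j p s *: phi (sw t j p s).
Proof.
move=> E.
have wv : isWV t j by move: E; case: pickP => // x hx [<-].
rewrite /phi -(mu_sw ord0 ord0 wv) /= E.
apply: eq_bigr => p _; apply: eq_bigr => s _.
by rewrite (mu_sw' p s ord0 ord0 wv).
Qed.

Lemma sw_comm t j j0 p s p' s' : (j.+1 < j0)%N || (j0.+1 < j)%N ->
  (j.+1 < k)%N -> (j0.+1 < k)%N ->
  sw (sw t j p s) j0 p' s' = sw (sw t j0 p' s') j p s.
Proof.
move=> d jk j0k; apply: eq_word => i _; rewrite /sw /upd2.
rewrite !lt_upd ?(ltnW jk) ?(ltnW j0k) //.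
case: (eqVneq i j0.+1) => [e|n1]; case: (eqVneq i j0) => [e'|n2];
 case: (eqVneq i j.+1) => [e2|n3]; case: (eqVneq i j) => [e3|n4] //; move: d; lia.
Qed.

Lemma lt_sw_far t j p s i : (j.+1 < k)%N -> i != j -> i != j.+1 -> lt (sw t j p s) i = lt t i.
Proof.
move=> jk n1 n2; rewrite /sw /upd2 !lt_upd ?(ltnW jk) //.
by rewrite (negbTE n1) (negbTE n2).
Qed.

Lemma swap_sum4 (V : nmodType) (F : ix -> ix -> ix -> ix -> V) :
  \sum_(a : ix) \sum_(b : ix) \sum_(c : ix) \sum_(d : ix) F a b c d =
  \sum_(c : ix) \sum_(d : ix) \sum_(a : ix) \sum_(b : ix) F a b c d.
Proof.
rewrite pair_big /=; under eq_bigr => x _ do rewrite pair_big /=.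
rewrite exchange_big /= [RHS]pair_big /=.
apply: eq_bigr => y _; by rewrite pair_big.
Qed.

Lemma swap4 (a b : ix -> ix -> K) (F : ix -> ix -> ix -> ix -> T) :
  \sum_(p : ix) \sum_(s : ix) a p s *: \sum_(p' : ix) \sum_(s' : ix) b p' s' *: F p s p' s'
  = \sum_(p' : ix) \sum_(s' : ix) b p' s' *: \sum_(p : ix) \sum_(s : ix) a p s *: F p s p' s'.
Proof.
have E : forall (a b : ix -> ix -> K) (F : ix -> ix -> ix -> ix -> T),
  \sum_(p : ix) \sum_(s : ix) a p s *: \sum_(p' : ix) \sum_(s' : ix) b p' s' *: F p s p' s'
  = \sum_(p : ix) \sum_(s : ix) \sum_(p' : ix) \sum_(s' : ix) (a p s * b p' s') *: F p s p' s'.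
  move=> a' b' F'; apply: eq_bigr => p _; apply: eq_bigr => s _.
  rewrite scaler_sumr; apply: eq_bigr => p' _; rewrite scaler_sumr; apply: eq_bigr => s' _.
  by rewrite scalerA.
rewrite !E swap_sum4; do 4! (apply: eq_bigr => ? _); by rewrite mulrC.
Qed.

Lemma phi_step t j : isWV t j ->
  phi t = \sum_(p : ix) \sum_(s : ix) cf t j p s *: phi (sw t j p s).
Proof.
move: {-1}(mu t).+1 (ltnSn (mu t)) => N.
elim: N t j => // N IH t j hN wv.
case E: [pick j : 'I_k | isWV t j] => [j0|]; last first.
  have jk : (j < k)%N by move: wv => /andP [/andP [h _] _]; exact: ltnW.
  by move: E; case: pickP => // /(_ (Ordinal jk)) /=; rewrite wv.
rewrite (phi_pick E).
have wv0 : isWV t j0 by move: E; case: pickP => // x hx [<-].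
case: (eqVneq (j0 : nat) j) => [<-//|ne].
have d : (j.+1 < j0)%N || (j0.+1 < j)%N by apply: WV_disj wv wv0 _; rewrite eq_sym.
move: (wv) (wv0) => /andP [/andP [jk _] _] /andP [/andP [j0k _] _].
have far1 : forall p s (i : nat), (i == j) || (i == j.+1) -> lt (sw t j0 p s) i = lt t i.
  move=> p s i /orP [] /eqP ->; apply: lt_sw_far => //; apply/eqP; move: d; lia.
have far2 : forall p s (i : nat), (i == j0) || (i == j0.+1) -> lt (sw t j p s) i = lt t i.
  move=> p s i /orP [] /eqP ->; apply: lt_sw_far => //; apply/eqP; move: d; lia.
have wvA : forall p s, isWV (sw t j0 p s) j.
  move=> p s; move: wv; rewrite /isWV !far1 ?eqxx ?orbT //.
have wvB : forall p s, isWV (sw t j p s) j0.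
  move=> p s; move: wv0; rewrite /isWV !far2 ?eqxx ?orbT //.
have muA : forall p s, (mu (sw t j0 p s) < N)%N.
  by move=> p s; rewrite -ltnS (mu_sw p s wv0) (leq_trans _ hN).
have muB : forall p s, (mu (sw t j p s) < N)%N.
  by move=> p s; rewrite -ltnS (mu_sw p s wv) (leq_trans _ hN).
transitivity (\sum_(p : ix) \sum_(s : ix) cf t j0 p s *:
   \sum_(p' : ix) \sum_(s' : ix) cf t j p' s' *: phi (sw (sw t j0 p s) j p' s')).
  apply: eq_bigr => p _; apply: eq_bigr => s _; rewrite (IH _ _ (muA p s) (wvA p s)).
  congr (_ *: _); apply: eq_bigr => p' _; apply: eq_bigr => s' _.
  by rewrite /cf !far1 ?eqxx ?orbT.
symmetry.
transitivity (\sum_(p : ix) \sum_(s : ix) cf t j p s *: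
   \sum_(p' : ix) \sum_(s' : ix) cf t j0 p' s' *: phi (sw (sw t j p s) j0 p' s')).
  apply: eq_bigr => p _; apply: eq_bigr => s _; rewrite (IH _ _ (muB p s) (wvB p s)).
  congr (_ *: _); apply: eq_bigr => p' _; apply: eq_bigr => s' _.
  by rewrite /cf !far2 ?eqxx ?orbT.
rewrite (swap4 (fun p s => cf t j p s) (fun p s => cf t j0 p s)).
apply: eq_bigr => p _; apply: eq_bigr => s _; congr (_ *: _).
apply: eq_bigr => p1 _; apply: eq_bigr => s1 _; by rewrite sw_comm.
Qed.

End Phi.

Lemma lt_updI k (t : k.-tuple letter) j x i : (i < k)%N -> lt (upd t j x) i = if i == j then x else lt t i.
Proof.
move=> ik; rewrite /lt; change i with (nat_of_ord (Ordinal ik)); rewrite -!tnth_nth tnth_mktuple //.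
Qed.

Definition upd3 k (t : k.-tuple letter) i x y z := upd (upd2 t i x y) i.+2 z.

Lemma n_S1 i : (i == i.+1) = false. Proof. by elim: i. Qed.
Lemma n_S2 i : (i == i.+2) = false. Proof. by elim: i. Qed.
Lemma n_S3 i : (i == i.+3) = false. Proof. by elim: i. Qed.
Lemma S1_n i : (i.+1 == i) = false. Proof. by elim: i. Qed.
Lemma S2_n i : (i.+2 == i) = false. Proof. by elim: i. Qed.
Lemma S3_n i : (i.+3 == i) = false. Proof. by elim: i. Qed.
Ltac simpl_eqs := rewrite ?eqSS ?eqxx ?n_S1 ?n_S2 ?n_S3 ?S1_n ?S2_n ?S3_n /=.

Ltac solve_word := let Hl := fresh "Hl" in apply: eq_word => ? Hl; rewrite ?/upd2 ?/upd3 !(lt_updI _ _ _ Hl); do ! case: eqP => ?; first [done | congruence | lia].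

Section Place.
Variable K : fieldType.
Variable L : BQD K.
Variable k : nat.
Notation word := (k.-tuple letter).
Notation T := (Tdeg K k).

Definition Phi (u : T) : T := \sum_(t : word) u t *: phi L t.

Lemma Phi_is_linear : linear Phi.
Proof.
move=> a u v; rewrite /Phi scaler_sumr -big_split; apply: eq_bigr => t _.
by rewrite !ffunE scalerDl scalerA.
Qed.

HB.instance Definition _ := GRing.isLinear.Build K T T *:%R Phi Phi_is_linear.

Lemma Phi_basis t : Phi (basisT K t) = phi L t.
Proof.
rewrite /Phi (bigD1 t) //= big1 ?addr0; first by rewrite ffunE eqxx scale1r.
by move=> t' /negbTE ne; rewrite ffunE ne scale0r.
Qed.


Definition P2 (s : word) i f1 f2 (h : ix -> ix -> K) : T :=
  \sum_(x : ix) \sum_(y : ix) h x y *: basisT K (upd2 s i (f1, x) (f2, y)).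
Definition P3 (s : word) i f1 f2 f3 (h : ix -> ix -> ix -> K) : T :=
  \sum_(x : ix) \sum_(y : ix) \sum_(z : ix) h x y z *: basisT K (upd3 s i (f1, x) (f2, y) (f3, z)).

Lemma Phi_P2 s i f1 f2 h : Phi (P2 s i f1 f2 h) =
  \sum_(x : ix) \sum_(y : ix) h x y *: phi L (upd2 s i (f1, x) (f2, y)).
Proof.
rewrite linear_sum; apply: eq_bigr => x _; rewrite linear_sum; apply: eq_bigr => y _.
by rewrite linearZ /= Phi_basis.
Qed.

Lemma Phi_P3 s i f1 f2 f3 h : Phi (P3 s i f1 f2 f3 h) =
  \sum_(x : ix) \sum_(y : ix) \sum_(z : ix) h x y z *: phi L (upd3 s i (f1, x) (f2, y) (f3, z)).
Proof.
rewrite linear_sum; apply: eq_bigr => x _; rewrite linear_sum; apply: eq_bigr => y _.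
rewrite linear_sum; apply: eq_bigr => z _.
by rewrite linearZ /= Phi_basis.
Qed.

Lemma ex3 (V : nmodType) (F : ix -> ix -> ix -> V) :
  \sum_(a : ix) \sum_(b : ix) \sum_(c : ix) F a b c = \sum_(c : ix) \sum_(a : ix) \sum_(b : ix) F a b c.
Proof.
rewrite pair_big /= exchange_big /=; apply: eq_bigr => c _.
by rewrite pair_big.
Qed.

Lemma swap12 s i f3 h : (i.+2 < k)%N ->
  Phi (P3 s i true false f3 h) =
  Phi (P3 s i false true f3 (fun p q z => \sum_(u : ix) \sum_(v : ix) sc L * bqG L u v p q * h u v z)).
Proof.
move=> ik; rewrite !Phi_P3.
transitivity (\sum_(u : ix) \sum_(v : ix) \sum_(z : ix) \sum_(p : ix) \sum_(q : ix)
   (h u v z * (sc L * bqG L u v p q)) *: phi L (upd3 s i (false, p) (true, q) (f3, z))).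
  apply: eq_bigr => u _; apply: eq_bigr => v _; apply: eq_bigr => z _.
  have wv : isWV (upd3 s i (true, u) (false, v) (f3, z)) i.
    rewrite /isWV /upd3 /upd2 !lt_upd; try lia.
    simpl_eqs; apply/andP; split => //; lia.
  rewrite (phi_step L wv) scaler_sumr; apply: eq_bigr => p _; rewrite scaler_sumr; apply: eq_bigr => q _.
  rewrite scalerA /cf /upd3 /upd2 !lt_upd; try lia.
  simpl_eqs.
  congr (_ *: phi L _); rewrite /sw; solve_word.
under eq_bigr => u _ do under eq_bigr => v _ do rewrite -ex3.
rewrite swap_sum4; apply: eq_bigr => p _; apply: eq_bigr => q _.
rewrite ex3; apply: eq_bigr => z _.
rewrite scaler_suml; apply: eq_bigr => u _; rewrite scaler_suml; apply: eq_bigr => v _.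
by rewrite mulrC.
Qed.

Lemma swap23 s i f1 h : (i.+2 < k)%N ->
  Phi (P3 s i f1 true false h) =
  Phi (P3 s i f1 false true (fun x p q => \sum_(v : ix) \sum_(w : ix) sc L * bqG L v w p q * h x v w)).
Proof.
move=> ik; rewrite !Phi_P3; apply: eq_bigr => x _.
transitivity (\sum_(v : ix) \sum_(w : ix) \sum_(p : ix) \sum_(q : ix)
   (h x v w * (sc L * bqG L v w p q)) *: phi L (upd3 s i (f1, x) (false, p) (true, q))).
  apply: eq_bigr => v _; apply: eq_bigr => w _.
  have wv : isWV (upd3 s i (f1, x) (true, v) (false, w)) i.+1.
    rewrite /isWV /upd3 /upd2 !lt_upd; try lia.
    simpl_eqs; apply/andP; split => //; lia.
  rewrite (phi_step L wv) scaler_sumr; apply: eq_bigr => p _; rewrite scaler_sumr; apply: eq_bigr => q _.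
  rewrite scalerA /cf /upd3 /upd2 !lt_upd; try lia.
  simpl_eqs.
  congr (_ *: phi L _); rewrite /sw; solve_word.
rewrite swap_sum4; apply: eq_bigr => p _; apply: eq_bigr => q _.
rewrite scaler_suml; apply: eq_bigr => v _; rewrite scaler_suml; apply: eq_bigr => w _.
by rewrite mulrC.
Qed.

Lemma P3_split_first s i f1 f2 f3 h :
  P3 s i f1 f2 f3 h = \sum_(x : ix) P2 (upd s i (f1, x)) i.+1 f2 f3 (h x).
Proof. by []. Qed.

Lemma P3_split_last s i f1 f2 f3 h : (i.+2 < k)%N ->
  P3 s i f1 f2 f3 h = \sum_(z : ix) P2 (upd s i.+2 (f3, z)) i f1 f2 (fun x y => h x y z).
Proof.
move=> ik; rewrite /P3 /P2 ex3; apply: eq_bigr => x _; apply: eq_bigr => y _; apply: eq_bigr => z _.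
congr (_ *: basisT K _); solve_word.
Qed.

Lemma sum_kron (V : lmodType K) (j : ix) (F : ix -> V) :
  \sum_(x : ix) (x == j)%:R *: F x = F j.
Proof.
rewrite (bigD1 j) //= eqxx scale1r big1 ?addr0 // => x /negbTE ->; by rewrite scale0r.
Qed.

Lemma P2_scal s i f1 f2 c h : P2 s i f1 f2 (fun x y => c * h x y) = c *: P2 s i f1 f2 h.
Proof.
rewrite /P2 scaler_sumr; apply: eq_bigr => x _; rewrite scaler_sumr; apply: eq_bigr => y _.
by rewrite scalerA.
Qed.

Lemma P2_ext s i f1 f2 h1 h2 : (forall x y, h1 x y = h2 x y) -> P2 s i f1 f2 h1 = P2 s i f1 f2 h2.
Proof. by move=> e; rewrite /P2; do 2! (apply: eq_bigr => ? _); rewrite e. Qed.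

Lemma P2_ext_left s j f0 k0 f1 f2 h : (j.+2 < k)%N -> lt s j = (f0, k0) ->
  P2 s j.+1 f1 f2 h = P3 s j f0 f1 f2 (fun x y z => (x == k0)%:R * h y z).
Proof.
move=> jk e.
rewrite /P3 (eq_bigr (fun x => (x == k0)%:R *: \sum_(y : ix) \sum_(z : ix) h y z *: basisT K (upd3 s j (f0, x) (f1, y) (f2, z)))); last first.
  move=> x _; rewrite scaler_sumr; apply: eq_bigr => y _; rewrite scaler_sumr; apply: eq_bigr => z _; by rewrite scalerA.
rewrite sum_kron /P2; apply: eq_bigr => y _; apply: eq_bigr => z _; congr (_ *: basisT K _); rewrite -e; solve_word.
Qed.

Lemma P2_ext_right s i f3 k3 f1 f2 h : (i.+2 < k)%N -> lt s i.+2 = (f3, k3) ->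
  P2 s i f1 f2 h = P3 s i f1 f2 f3 (fun x y z => h x y * (z == k3)%:R).
Proof.
move=> ik e; rewrite (P3_split_last _ _ _ _ _ ik).
rewrite (eq_bigr (fun z => (z == k3)%:R *: P2 (upd s i.+2 (f3, z)) i f1 f2 h)); last first.
  by move=> z _; rewrite -P2_scal; apply: P2_ext => x y; rewrite mulrC.
rewrite sum_kron /P2; apply: eq_bigr => x _; apply: eq_bigr => y _; congr (_ *: basisT K _); rewrite -e; solve_word.
Qed.

Lemma P2_disj s i f1 f2 h j : (i.+1 < k)%N -> isWV s j -> (j.+1 < i)%N || (i.+1 < j)%N ->
  Phi (P2 s i f1 f2 h) = \sum_(p : ix) \sum_(q : ix) cf L s j p q *: Phi (P2 (sw s j p q) i f1 f2 h).
Proof.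
move=> ik wv d; move: (wv) => /andP [/andP [jk _] _].
have far : forall x y l, (l == j) || (l == j.+1) -> lt (upd2 s i (f1, x) (f2, y)) l = lt s l.
  move=> x y l /orP [] /eqP ->; rewrite /upd2 !lt_upd; try lia; do ! case: eqP => //; lia.
rewrite Phi_P2.
under [RHS]eq_bigr => p _ do under eq_bigr => q _ do rewrite Phi_P2.
rewrite -swap4; apply: eq_bigr => x _; apply: eq_bigr => y _.
have wv' : isWV (upd2 s i (f1, x) (f2, y)) j by rewrite /isWV !far ?eqxx ?orbT.
rewrite (phi_step L wv'); congr (_ *: _); apply: eq_bigr => p _; apply: eq_bigr => q _.
rewrite /cf !far ?eqxx ?orbT //; congr (_ *: phi L _); rewrite /sw; solve_word.
Qed.

Lemma P2_lin s i f1 f2 h1 h2 : P2 s i f1 f2 (fun x y => h1 x y + h2 x y) = P2 s i f1 f2 h1 + P2 s i f1 f2 h2.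
Proof.
rewrite /P2 -big_split; apply: eq_bigr => x _; rewrite -big_split; apply: eq_bigr => y _.
by rewrite scalerDl.
Qed.

Lemma P3_lin s i f1 f2 f3 h1 h2 : P3 s i f1 f2 f3 (fun x y z => h1 x y z + h2 x y z) = P3 s i f1 f2 f3 h1 + P3 s i f1 f2 f3 h2.
Proof.
rewrite /P3 -big_split; apply: eq_bigr => x _; rewrite -big_split; apply: eq_bigr => y _.
rewrite -big_split; apply: eq_bigr => z _; by rewrite scalerDl.
Qed.

Lemma P3_ext s i f1 f2 f3 h1 h2 : (forall x y z, h1 x y z = h2 x y z) -> P3 s i f1 f2 f3 h1 = P3 s i f1 f2 f3 h2.
Proof. by move=> e; rewrite /P3; do 3! (apply: eq_bigr => ? _); rewrite e. Qed.

End Place.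

Section Gen.
Variable K : comNzRingType.
Implicit Types (f : ix -> K).

Lemma sum_kron_mul (j : ix) (F : ix -> K) : \sum_(x : ix) (x == j)%:R * F x = F j.
Proof.
rewrite (bigD1 j) //= eqxx mul1r big1 ?addr0 // => x /negbTE ->; by rewrite mul0r.
Qed.

Lemma M1 f (g : ix -> ix -> K) (h : ix -> K) :
  \sum_(y : ix) (\sum_(r : ix) f r * g r y) * h y = \sum_(r : ix) f r * \sum_(y : ix) g r y * h y.
Proof.
under eq_bigr => y _ do rewrite big_distrl /=.
rewrite exchange_big /=; apply: eq_bigr => r _; rewrite big_distrr /=.
by apply: eq_bigr => y _; rewrite mulrA.
Qed.

Lemma M2 (F : ix -> ix -> ix -> K) :
  \sum_(v : ix) \sum_(w : ix) \sum_(r : ix) F v w r = \sum_(r : ix) \sum_(v : ix) \sum_(w : ix) F v w r.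
Proof.
rewrite pair_big /= exchange_big /=; apply: eq_bigr => r _; by rewrite pair_big.
Qed.

Lemma R_a (s : K) (Gf : ix -> ix -> K) f (g : ix -> ix -> ix -> K) (h : ix -> ix -> K) :
  \sum_(v : ix) \sum_(w : ix) s * Gf v w * (s * \sum_(y : ix) (\sum_(r : ix) f r * g r y v) * h y w)
  = s ^+ 2 * \sum_(r : ix) f r * \sum_(v : ix) \sum_(w : ix) Gf v w * \sum_(y : ix) g r y v * h y w.
Proof.
transitivity (\sum_(v : ix) \sum_(w : ix) \sum_(r : ix) s ^+ 2 * (f r * (Gf v w * \sum_(y : ix) g r y v * h y w))).
  apply: eq_bigr => v _; apply: eq_bigr => w _.
  rewrite (M1 f (fun r y => g r y v) (fun y => h y w)) big_distrr big_distrr /=.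
  by apply: eq_bigr => r _; rewrite expr2; ring.
rewrite M2 big_distrr /=; apply: eq_bigr => r _.
rewrite mulrA big_distrr /=; apply: eq_bigr => v _; rewrite big_distrr /=.
by apply: eq_bigr => w _; rewrite mulrA.
Qed.

Lemma M3 (X Y Z W : ix -> ix -> K) :
  \sum_(v : ix) \sum_(w : ix) (\sum_(u : ix) X v u * Y u w) * (\sum_(y : ix) Z y v * W y w)
  = \sum_(y : ix) \sum_(w : ix) \sum_(v : ix) \sum_(u : ix) W y w * Z y v * X v u * Y u w.
Proof.
under eq_bigr => v _ do under eq_bigr => w _ do rewrite big_distrl /=.
under eq_bigr => v _ do under eq_bigr => w _ do under eq_bigr => u _ do rewrite big_distrr /=.
under eq_bigr => v _ do under eq_bigr => w _ do rewrite exchange_big /=.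
under eq_bigr => v _ do rewrite exchange_big /=.
rewrite exchange_big /=.
apply: eq_bigr => y _; rewrite exchange_big /=.
do 3! (apply: eq_bigr => ? _); ring.
Qed.

Lemma C1 (k0 : ix) (F H : ix -> ix -> K) :
  \sum_(u : ix) \sum_(v : ix) F u v * ((u == k0)%:R * H u v) = \sum_(v : ix) F k0 v * H k0 v.
Proof.
rewrite -(sum_kron_mul k0 (fun u => \sum_(v : ix) F u v * H u v)).
apply: eq_bigr => u _; rewrite big_distrr; apply: eq_bigr => v _ /=; ring.
Qed.

Lemma C2 (k3 : ix) (F H : ix -> ix -> K) :
  \sum_(v : ix) \sum_(w : ix) F v w * (H v w * (w == k3)%:R) = \sum_(v : ix) F v k3 * H v k3.
Proof.
apply: eq_bigr => v _; rewrite -(sum_kron_mul k3 (fun w => F v w * H v w)).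
apply: eq_bigr => w _ /=; ring.
Qed.

Lemma L5 (s : K) (X : ix -> ix -> K) (Y Z : ix -> K) :
  \sum_(v : ix) s * (\sum_(r : ix) X v r * Y r) * Z v = s * \sum_(r : ix) (\sum_(v : ix) Z v * X v r) * Y r.
Proof.
transitivity (\sum_(v : ix) \sum_(r : ix) s * (Z v * X v r * Y r)).
  apply: eq_bigr => v _; rewrite big_distrr big_distrl /=; apply: eq_bigr => r _ /=; ring.
rewrite exchange_big big_distrr /=; apply: eq_bigr => r _.
rewrite big_distrl big_distrr /=; apply: eq_bigr => v _ /=; ring.
Qed.

Lemma L6 (w : K) (Dm : ix -> ix -> K) (E F : ix -> K) :
  \sum_(r : ix) (w * \sum_(j : ix) Dm j r * E j) * F r = w * \sum_(j : ix) E j * \sum_(r : ix) Dm j r * F r.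
Proof.
transitivity (\sum_(r : ix) \sum_(j : ix) w * (E j * (Dm j r * F r))).
  apply: eq_bigr => r _; rewrite big_distrr big_distrl /=; apply: eq_bigr => j _ /=; ring.
rewrite exchange_big big_distrr /=; apply: eq_bigr => j _.
rewrite big_distrr big_distrr /=; apply: eq_bigr => r _ /=; ring.
Qed.

Lemma L7 (F : ix -> ix -> K) (c : ix -> ix -> K) (A' : ix -> K) (dl : ix -> K) :
  \sum_(v : ix) \sum_(w : ix) F v w * ((\sum_(e : ix) c e v * A' e) * dl w)
  = \sum_(e : ix) A' e * \sum_(v : ix) \sum_(w : ix) F v w * (c e v * dl w).
Proof.
transitivity (\sum_(v : ix) \sum_(w : ix) \sum_(e : ix) A' e * (F v w * (c e v * dl w))).
  apply: eq_bigr => v _; apply: eq_bigr => w _; rewrite big_distrl big_distrr /=.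
  apply: eq_bigr => e _ /=; ring.
rewrite M2; apply: eq_bigr => e _; rewrite big_distrr; apply: eq_bigr => v _ /=.
by rewrite big_distrr.
Qed.

Lemma L8 (s s' : K) (Gf Z : ix -> ix -> K) (W : ix -> ix -> ix -> K) (V : ix -> K) :
  \sum_(x : ix) \sum_(p : ix) s * Gf x p * (\sum_(e : ix) Z e x * (s' * \sum_(j : ix) W j e p * V j))
  = s * s' * \sum_(j : ix) V j * \sum_(x : ix) \sum_(p : ix) Gf x p * \sum_(e : ix) Z e x * W j e p.
Proof.
transitivity (\sum_(x : ix) \sum_(p : ix) \sum_(j : ix) (s * s') * (V j * (Gf x p * \sum_(e : ix) Z e x * W j e p))).
  apply: eq_bigr => x _; apply: eq_bigr => p _.
  transitivity (s * Gf x p * \sum_(j : ix) \sum_(e : ix) Z e x * (s' * (W j e p * V j))).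
    congr (_ * _); rewrite exchange_big /=; apply: eq_bigr => e _.
    by rewrite big_distrr big_distrr.
  rewrite big_distrr /=; apply: eq_bigr => j _.
  rewrite !big_distrr /=; apply: eq_bigr => e _ /=; ring.
rewrite M2 big_distrr /=; apply: eq_bigr => j _.
rewrite mulrA big_distrr /=; apply: eq_bigr => x _; rewrite big_distrr /=.
by apply: eq_bigr => p _; rewrite mulrA.
Qed.

End Gen.

Section Ids.
Variable K : fieldType.
Variable L : BQD K.
Local Notation a := (bq_a L). Local Notation A := (bq_A L).
Local Notation G := (bqG L).
Local Notation sc := (sc L).
Local Notation rho := ((bq_q L + (bq_q L)^-1) ^- 2).
Local Notation B := (bq_B L). Local Notation b := (bq_b L).
Local Notation c := (bq_c L). Local Notation D := (bq_D L). Local Notation d := (bq_d L).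
Local Notation om := (bq_om L).

Lemma CORE r l p q :
  \sum_(v : ix) \sum_(w : ix) G v w p q * (\sum_(y : ix) A r y v * a l y w)
  = rho * (kron K r p * kron K l q + c p q * D r l).
Proof.
rewrite -bq_ax12 /bqG.
exact: (M3 (fun v u => a v p u) (fun u w => A u w q) (fun y v => A r y v) (fun y w => a l y w)).
Qed.

Lemma ID_a k0 l x p q :
  \sum_(v : ix) \sum_(w : ix) sc * G v w p q * (sc * \sum_(v' : ix) G k0 v' x v * a l v' w)
  = sc ^+ 2 * rho * (a k0 x p * (q == l)%:R) + sc ^+ 2 * rho * (B k0 l x * c p q).
Proof.
rewrite (R_a sc (fun v w => G v w p q) (a k0 x) (fun r y v => A r y v) (a l)).
under eq_bigr => r _ do rewrite CORE.
rewrite (eq_bigr (fun r => (r == p)%:R * (rho * kron K l q * a k0 x r) + rho * c p q * (a k0 x r * D r l))); last first.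
  by move=> r _; rewrite /kron; ring.
rewrite big_split /= sum_kron_mul -big_distrr /= -bq_ax6 /kron eq_sym; ring.
Qed.

Lemma ID_cl k0 p q z :
  \sum_(u : ix) \sum_(v : ix) sc * G u v p q * ((u == k0)%:R * c v z) = sc * \sum_(r : ix) a k0 p r * b r q z.
Proof.
rewrite (C1 k0 (fun u v => sc * G u v p q) (fun u v => c v z)).
rewrite (eq_bigr (fun v => sc * ((\sum_(r : ix) a k0 p r * A r v q) * c v z))); last first.
  by move=> v _; rewrite /bqG mulrA.
rewrite -big_distrr /= (M1 (a k0 p) (fun r v => A r v q) (fun v => c v z)); congr (_ * _).
apply: eq_bigr => r _; rewrite bq_ax9; congr (_ * _); apply: eq_bigr => v _; by rewrite mulrC.
Qed.

Lemma ID_cr k3 x p q :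
  \sum_(v : ix) \sum_(w : ix) sc * G v w p q * (c x v * (w == k3)%:R) = sc * om ^+ 2 * \sum_(j : ix) a j x p * b k3 j q.
Proof.
rewrite (C2 k3 (fun v w => sc * G v w p q) (fun v w => c x v)) /bqG.
rewrite (L5 sc (fun v r => a v p r) (fun r => A r k3 q) (fun v => c x v)).
under eq_bigr => r _ do rewrite bq_ax5.
rewrite (L6 om (fun j r => d j r) (fun j => a j x p) (fun r => A r k3 q)).
have e7 : forall j, \sum_(r : ix) d j r * A r k3 q = om * b k3 j q.
  by move=> j; rewrite bq_ax7 mulrA -exprS bq_om3 mul1r.
under eq_bigr => j _ do rewrite e7.
rewrite -mulrA; congr (_ * _); rewrite !big_distrr /=; apply: eq_bigr => j _; rewrite expr2; ring.
Qed.

Lemma ID_b l k3 t u q :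
  \sum_(x : ix) \sum_(p : ix) sc * G x p t u * (\sum_(v : ix) \sum_(w : ix) sc * G v w p q * (b l x v * (w == k3)%:R))
  = sc ^+ 2 * om ^+ 2 * rho * ((t == l)%:R * b k3 u q) + sc ^+ 2 * om ^+ 2 * rho * (c t u * \sum_(j : ix) D l j * b k3 j q).
Proof.
transitivity (\sum_(x : ix) \sum_(p : ix) sc * G x p t u * (\sum_(e : ix) A l e x * (sc * om ^+ 2 * \sum_(j : ix) a j e p * b k3 j q))).
  apply: eq_bigr => x _; apply: eq_bigr => p _; congr (_ * _).
  under eq_bigr => v _ do under eq_bigr => w _ do rewrite bq_ax9.
  rewrite (L7 (fun v w => sc * G v w p q) c (fun e => A l e x) (fun w => (w == k3)%:R)).
  by apply: eq_bigr => e _; rewrite ID_cr.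
rewrite (L8 sc (sc * om ^+ 2) (fun x p => G x p t u) (fun e x => A l e x) (fun j e p => a j e p) (fun j => b k3 j q)).
under eq_bigr => j _ do rewrite CORE.
rewrite (eq_bigr (fun j => (j == u)%:R * (rho * kron K l t * b k3 j q) + rho * c t u * (D l j * b k3 j q))); last first.
  by move=> j _; rewrite /kron; ring.
rewrite big_split /= sum_kron_mul -big_distrr /= /kron eq_sym; ring.
Qed.

End Ids.

Section Comb.
Variable k : nat.
Notation word := (k.-tuple letter).

Definition S (t : word) (f : nat -> nat) : nat := (\sum_(i < k) isV (lt t i) * f i)%N.

Lemma mu_S (t : word) : mu t = S t id. Proof. by []. Qed.

Lemma count_nat (s : seq letter) : count isV s = (\sum_(0 <= i < size s) isV (nth dflt s i))%N.
Proof.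
elim: s => [|x s IH] /=; first by rewrite big_geq.
by rewrite big_nat_recl //= IH.
Qed.

Lemma count_S (t : word) : count isV t = S t (fun _ => 1%N).
Proof.
rewrite count_nat size_tuple big_mkord /S; apply: eq_bigr => i _; by rewrite muln1.
Qed.

Lemma S3 (t t' : word) j f : (j.+2 < k)%N ->
  (forall i, (i < k)%N -> i != j -> i != j.+1 -> i != j.+2 -> isV (lt t i) = isV (lt t' i)) ->
  (S t f + (isV (lt t' j) * f j + isV (lt t' j.+1) * f j.+1 + isV (lt t' j.+2) * f j.+2) =
  S t' f + (isV (lt t j) * f j + isV (lt t j.+1) * f j.+1 + isV (lt t j.+2) * f j.+2))%N.
Proof.
move=> jk H.
pose Fl := fun i : 'I_k => (isV (lt t i) * f i + ((i == j :> nat) * (isV (lt t' j) * f j) +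
     (i == j.+1 :> nat) * (isV (lt t' j.+1) * f j.+1) + (i == j.+2 :> nat) * (isV (lt t' j.+2) * f j.+2)))%N.
pose Fr := fun i : 'I_k => (isV (lt t' i) * f i + ((i == j :> nat) * (isV (lt t j) * f j) +
     (i == j.+1 :> nat) * (isV (lt t j.+1) * f j.+1) + (i == j.+2 :> nat) * (isV (lt t j.+2) * f j.+2)))%N.
have P : forall i, Fl i = Fr i.
  move=> [i ik]; rewrite /Fl /Fr /=.
  case: (eqVneq i j) => [->|n0]; first by simpl_eqs; lia.
  case: (eqVneq i j.+1) => [->|n1]; first by simpl_eqs; lia.
  case: (eqVneq i j.+2) => [->|n2]; first by simpl_eqs; lia.
  by rewrite (H i ik n0 n1 n2); lia.
have E : (\sum_(i < k) Fl i = \sum_(i < k) Fr i)%N by apply: eq_bigr => i _; exact: P.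
rewrite /Fl /Fr !big_split /= !sum_delta in E; try lia.
by rewrite /S.
Qed.

Lemma normal_mono (t : word) : ~~ [exists j : 'I_k, isWV t j] ->
  forall j d, (j + d < k)%N -> isW (lt t j) -> isW (lt t (j + d)).
Proof.
move=> nWV j; elim=> [|d IH] jd wj; first by rewrite addn0.
have w1 : isW (lt t (j + d)) by apply: IH => //; lia.
apply/negPn/negP => vn.
have jdk : (j + d < k)%N by lia.
move/existsP: nWV; apply; exists (Ordinal jdk).
rewrite /isWV /= w1 -addnS jd /=; by move: vn; rewrite /isW /isV.
Qed.

Lemma count_split (s : seq letter) j : count isV s = (count isV (take j s) + count isV (drop j s))%N.
Proof. by rewrite -count_cat cat_take_drop. Qed.

Lemma normal_VW (t : word) m : ~~ [exists j : 'I_k, isWV t j] -> count isV t = m ->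
  forall j, (j < k)%N -> isW (lt t j) = (m <= j)%N.
Proof.
move=> nWV cm j jk.
case wj: (isW (lt t j)).
  have dz : count isV (drop j t) = 0%N.
    apply/eqP; rewrite -leqn0 leqNgt -has_count; apply/negP => /(has_nthP dflt) [] i.
    rewrite size_drop size_tuple nth_drop => il vi.
    have jik : (j + i < k)%N by lia.
    have w := normal_mono nWV jik wj.
    by move: vi w; rewrite /isV /isW /lt => /negbTE ->.
  apply/esym; rewrite -cm (count_split _ j) dz addn0.
  apply: leq_trans (count_size _ _) _; rewrite size_take size_tuple; case: ifP => //; lia.
have tz : count isV (take j.+1 t) = j.+1.
  have : all isV (take j.+1 t).
    apply/(all_nthP dflt) => i; rewrite size_take size_tuple => il.
    have ij : (i <= j)%N by move: il; case: ifP; lia.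
    rewrite nth_take; last by lia.
    apply/negP => wi.
    have ijk : (i + (j - i) < k)%N by lia.
    have := normal_mono nWV ijk; rewrite subnKC // /lt /isW.
    by move: wj; rewrite /lt /isW => -> /(_ wi).
  rewrite all_count => /eqP ->; rewrite size_take size_tuple; case: ifP => //; lia.
apply/esym/negbTE; rewrite -ltnNge -cm (count_split _ j.+1) tz; lia.
Qed.

Lemma VW_normal (t : word) m : (m <= k)%N -> (forall j, (j < k)%N -> isW (lt t j) = (m <= j)%N) ->
  ~~ [exists j : 'I_k, isWV t j] /\ count isV t = m.
Proof.
move=> mk H; split.
  apply/existsP => [[j /andP [/andP [jk wj vj]]]].
  rewrite H // in wj; move: vj; rewrite /isV -/(isW _) H //; lia.
have dz : count isV (drop m t) = 0%N.
  apply/eqP; rewrite -leqn0 leqNgt -has_count; apply/negP => /(has_nthP dflt) [] i.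
  rewrite size_drop size_tuple nth_drop => il.
  have := H (m + i); rewrite /lt /isW /isV => ->; lia.
have tz : count isV (take m t) = m.
  have : all isV (take m t).
    apply/(all_nthP dflt) => i; rewrite size_take size_tuple => il.
    have im : (i < m)%N by move: il; case: ifP; lia.
    rewrite nth_take //.
    have := H i; rewrite /lt /isW /isV => ->; lia.
  rewrite all_count => /eqP ->; rewrite size_take size_tuple; case: ifP => //; lia.
by rewrite (count_split _ m) tz dz addn0.
Qed.

Lemma isWV_pat (t t' : word) j : (forall i, isV (lt t i) = isV (lt t' i)) -> isWV t j = isWV t' j.
Proof.
move=> H; have H' : forall i, isW (lt t i) = isW (lt t' i) by move=> i; apply: negb_inj; exact: H i.
by rewrite /isWV H' H.
Qed.

End Comb.

Section Placed.
Variable K : fieldType.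
Variable k : nat.
Notation word := (k.-tuple letter).
Notation T := (Tdeg K k).

Lemma eq_upd2 (t s : word) i x y : (i.+1 < k)%N ->
  (t == upd2 s i x y) =
  [&& [forall j : 'I_k, ((j != i :> nat) && (j != i.+1 :> nat)) ==> (tnth t j == tnth s j)],
      x == lt t i & y == lt t i.+1].
Proof.
move=> ik; apply/eqP/and3P.
  move=> ->; split.
  - apply/forallP => j; apply/implyP => /andP [n1 n2].
    by rewrite !(tnth_nth dflt) -/(lt _ j) -/(lt _ j) /upd2 !lt_upd ?(negbTE n1) ?(negbTE n2) //; lia.
  - by rewrite /upd2 !lt_upd; try lia; simpl_eqs.
  - by rewrite /upd2 !lt_upd; try lia; simpl_eqs.
move=> [/forallP H /eqP -> /eqP ->]; apply: eq_word => l lk.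
rewrite /upd2 !lt_upd; try lia.
case: eqP => [->//|n1]; case: eqP => [->//|n2].
have := H (Ordinal lk); rewrite /= !(tnth_nth dflt) /=.
by move/eqP: n1 => ->; move/eqP: n2 => -> /eqP.
Qed.

Lemma elem2_tuple (F : letter -> letter -> K) a b : elem2 F [tuple a; b] = F a b.
Proof. by rewrite /elem2 ffunE. Qed.

Lemma placed_exp (s : word) i (F : letter -> letter -> K) : (i.+1 < k)%N ->
  placed s i (elem2 F) = \sum_(x : letter) \sum_(y : letter) F x y *: basisT K (upd2 s i x y).
Proof.
move=> ik; apply/ffunP => t; rewrite ffunE sum_ffunE.
under eq_bigr => x _ do rewrite sum_ffunE.
under eq_bigr => x _ do under eq_bigr => y _ do rewrite !ffunE eq_upd2 //.
case: ifP => C.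
  rewrite elem2_tuple (bigD1 (lt t i)) //= (bigD1 (lt t i.+1)) //= !eqxx /=.
  rewrite big1 ?addr0; last by move=> y /negbTE ->; rewrite /= scaler0.
  rewrite big1 ?addr0; last first.
    move=> x /negbTE nx; apply: big1 => y _; by rewrite nx /= scaler0.
  by rewrite /lt; exact: (esym (mulr1 _)).
by symmetry; apply: big1 => x _; apply: big1 => y _; rewrite /= scaler0.
Qed.

Lemma sum_letter (V : nmodType) (G : letter -> V) :
  \sum_(x : letter) G x = \sum_(j : ix) G (true, j) + \sum_(j : ix) G (false, j).
Proof.
transitivity (\sum_(b : bool) \sum_(j : ix) G (b, j)); last by rewrite big_bool.
by rewrite pair_big /=; apply: eq_bigr => [[b j]] _.
Qed.

End Placed.

Section Gens.
Variable K : fieldType.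
Variable L : BQD K.
Variable k : nat.
Notation word := (k.-tuple letter).
Notation T := (Tdeg K k).

Lemma zsum (F : ix -> T) : \sum_(j : ix) (0 : K) *: F j = 0.
Proof. by apply: big1 => j _; rewrite scale0r. Qed.

Lemma placed_a (s : word) i k0 : (i.+1 < k)%N -> placed s i (gen_a L k0) = P2 s i false false (bq_a L k0).
Proof.
move=> ik; rewrite placed_exp // sum_letter.
under eq_bigr => j _ do rewrite sum_letter /= !zsum add0r.
under [X in _ + X]eq_bigr => j _ do rewrite sum_letter /= !zsum add0r.
by rewrite big1_eq add0r.
Qed.

Lemma placed_b (s : word) i k0 : (i.+1 < k)%N -> placed s i (gen_b L k0) = P2 s i true true (bq_b L k0).
Proof.
move=> ik; rewrite placed_exp // sum_letter.
under eq_bigr => j _ do rewrite sum_letter /= !zsum addr0.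
under [X in _ + X]eq_bigr => j _ do rewrite sum_letter /= !zsum add0r.
by rewrite big1_eq addr0.
Qed.

Lemma placed_c (s : word) i : (i.+1 < k)%N -> placed s i (gen_c L) = P2 s i false true (bq_c L).
Proof.
move=> ik; rewrite placed_exp // sum_letter.
under eq_bigr => j _ do rewrite sum_letter /= !zsum add0r.
under [X in _ + X]eq_bigr => j _ do rewrite sum_letter /= !zsum addr0.
by rewrite big1_eq add0r.
Qed.

Lemma placed_rel (s : word) i k0 i0 : (i.+1 < k)%N -> placed s i (gen_rel L k0 i0) =
  basisT K (upd2 s i (true, k0) (false, i0)) +
  (bq_q L + (bq_q L)^-1) *: \sum_(p : ix) \sum_(q : ix) bqG L k0 i0 p q *: basisT K (upd2 s i (false, p) (true, q)).
Proof.
move=> ik; rewrite placed_exp // sum_letter.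
under eq_bigr => j _ do rewrite sum_letter /= !zsum add0r.
under [X in _ + X]eq_bigr => j _ do rewrite sum_letter /= !zsum addr0.
congr (_ + _).
  rewrite (bigD1 k0) //= [X in _ + X]big1 ?addr0; last first.
    move=> x /negbTE nx; apply: big1 => y _; by rewrite /kron eq_sym nx mul0r scale0r.
  rewrite (bigD1 i0) //= [X in _ + X]big1 ?addr0; last first.
    move=> y /negbTE ny; by rewrite /kron (eq_sym i0) ny mulr0 scale0r.
  by rewrite /kron !eqxx mulr1 scale1r.
rewrite scaler_sumr; apply: eq_bigr => p _; rewrite scaler_sumr; apply: eq_bigr => q _.
by rewrite scalerA.
Qed.

End Gens.

Section Main.
Variable K : fieldType.
Variable L : BQD K.
Variables m n : nat.
Notation k := (m + n)%N.
Notation word := (k.-tuple letter).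
Notation T := (Tdeg K k).
Notation I' := (idealI' L m n).

Definition typ (s : word) i f1 f2 : word := upd2 s i (f1, ord0) (f2, ord0).

Definition kind (f1 f2 : bool) (h : ix -> ix -> K) : Prop :=
  [\/ [/\ f1 = false, f2 = false & exists k0, h = bq_a L k0],
      [/\ f1 = true, f2 = true & exists k0, h = bq_b L k0] |
      [/\ f1 = false, f2 = true & h = bq_c L]].

Lemma pat_upd2 (s : word) i f1 f2 x y l : (i.+1 < k)%N ->
  isV (lt (upd2 s i (f1, x) (f2, y)) l) = isV (lt (typ s i f1 f2) l).
Proof. move=> ik; rewrite /typ /upd2 !lt_upd; try lia; by case: (l == i.+1); case: (l == i). Qed.

Lemma count_pat (t t' : word) : (forall l, isV (lt t l) = isV (lt t' l)) -> count isV t = count isV t'.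
Proof. by move=> H; rewrite !count_S /S; apply: eq_bigr => l _; rewrite H. Qed.

Lemma VWword_lt (t : word) : VWword t = [forall j : 'I_k, isW (lt t j) == (m <= j)%N].
Proof. apply: eq_forallb => j; by rewrite (tnth_nth dflt). Qed.

Lemma normal_VWword (t : word) : ~~ [exists j : 'I_k, isWV t j] -> count isV t = m -> VWword t.
Proof.
move=> nw c; rewrite VWword_lt; apply/forallP => j; apply/eqP; exact: (normal_VW nw c (ltn_ord j)).
Qed.

Lemma memI'_a (s : word) i k0 : VWword s -> (i < m.-1)%N -> placed s i (gen_a L k0) \in I'.
Proof.
move=> vw im; rewrite /idealI'; apply: (subvP (addvSl _ _)); apply: (subvP (addvSl _ _)).
apply: memv_span; apply/flatten_mapP; exists s; first by rewrite mem_filter vw mem_enum in_setT.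
apply: allpairs_f; first by rewrite mem_iota.
by apply: map_f; rewrite mem_enum in_setT.
Qed.

Lemma memI'_c (s : word) : (0 < m)%N -> (0 < n)%N -> VWword s -> placed s m.-1 (gen_c L) \in I'.
Proof.
move=> m0 n0 vw; rewrite /idealI'; apply: (subvP (addvSl _ _)); apply: (subvP (addvSr _ _)).
apply: memv_span; apply: map_f; by rewrite mem_filter m0 n0 vw mem_enum in_setT.
Qed.

Lemma memI'_b (s : word) i k0 : VWword s -> (m <= i)%N -> (i < m + n.-1)%N -> placed s i (gen_b L k0) \in I'.
Proof.
move=> vw i1 i2; rewrite /idealI'; apply: (subvP (addvSr _ _)).
apply: memv_span; apply/flatten_mapP; exists s; first by rewrite mem_filter vw mem_enum in_setT.
apply: allpairs_f; first by rewrite mem_iota i1 i2.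
by apply: map_f; rewrite mem_enum in_setT.
Qed.

Lemma base (s : word) i f1 f2 h : kind f1 f2 h -> (i.+1 < k)%N ->
  ~~ [exists j : 'I_k, isWV (typ s i f1 f2) j] -> count isV (typ s i f1 f2) = m ->
  Phi L (P2 s i f1 f2 h) \in I'.
Proof.
move=> kd ik nw cm.
have -> : Phi L (P2 s i f1 f2 h) = P2 (typ s i f1 f2) i f1 f2 h.
  rewrite Phi_P2 /P2; apply: eq_bigr => x _; apply: eq_bigr => y _.
  rewrite phi_none; last first.
    case: pickP => // j; rewrite (isWV_pat _ (fun l => pat_upd2 s f1 f2 x y l ik)) => hj.
    by case/existsP: nw; exists j.
  congr (_ *: basisT K _); rewrite /typ; solve_word.
have vw := normal_VWword nw cm.
have Wi := normal_VW nw cm (j := i); have Wi1 := normal_VW nw cm (j := i.+1).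
rewrite /typ /upd2 !lt_upd in Wi Wi1; try lia.
move: Wi Wi1; simpl_eqs => Wi Wi1.
have Wi' := Wi (ltnW ik); have Wi1' := Wi1 ik.
case: kd => [[e1 e2 [k0 ->]] | [e1 e2 [k0 ->]] | [e1 e2 ->]]; rewrite e1 e2 in Wi' Wi1' vw *.
- rewrite -placed_a //; apply: memI'_a => //; move: Wi1'; rewrite /isW /=; lia.
- rewrite -placed_b //; apply: memI'_b => //; move: Wi'; rewrite /isW /=; lia.
- move: Wi' Wi1'; rewrite /isW /= => Wi' Wi1'.
  have ei : i = m.-1 by lia.
  rewrite -placed_c //; rewrite {2}ei; apply: memI'_c => //; lia.
Qed.

End Main.

Section Main2.
Variable K : fieldType.
Variable L : BQD K.
Variables m n : nat.
Notation k := (m + n)%N.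
Notation word := (k.-tuple letter).
Notation T := (Tdeg K k).
Notation I' := (idealI' L m n).
Local Notation rho := ((bq_q L + (bq_q L)^-1) ^- 2).

Lemma S2 (t t' : word) j f : (j.+1 < k)%N ->
  (forall i, (i < k)%N -> i != j -> i != j.+1 -> isV (lt t i) = isV (lt t' i)) ->
  (S t f + (isV (lt t' j) * f j + isV (lt t' j.+1) * f j.+1) =
  S t' f + (isV (lt t j) * f j + isV (lt t j.+1) * f j.+1))%N.
Proof.
move=> jk H.
pose Fl := fun i : 'I_k => (isV (lt t i) * f i + ((i == j :> nat) * (isV (lt t' j) * f j) +
     (i == j.+1 :> nat) * (isV (lt t' j.+1) * f j.+1)))%N.
pose Fr := fun i : 'I_k => (isV (lt t' i) * f i + ((i == j :> nat) * (isV (lt t j) * f j) +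
     (i == j.+1 :> nat) * (isV (lt t j.+1) * f j.+1)))%N.
have P : forall i, Fl i = Fr i.
  move=> [i ik]; rewrite /Fl /Fr /=.
  case: (eqVneq i j) => [->|n0]; first by simpl_eqs; lia.
  case: (eqVneq i j.+1) => [->|n1]; first by simpl_eqs; lia.
  by rewrite (H i ik n0 n1); lia.
have E : (\sum_(i < k) Fl i = \sum_(i < k) Fr i)%N by apply: eq_bigr => i _; exact: P.
rewrite /Fl /Fr !big_split /= !sum_delta in E; try lia.
by rewrite /S.
Qed.

Lemma count_sw (t : word) j p q : isWV t j -> count isV (sw t j p q) = count isV t.
Proof.
move=> wv; move: (wv) => /andP [/andP [jk wj vj]].
have E := S2 (t := t) (t' := sw t j p q) (fun _ => 1%N) jk.
rewrite !count_S; move: E; rewrite /sw /upd2 !lt_upd; try lia.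
simpl_eqs; move: wj vj; rewrite /isV /isW => -> /negbTE -> /=.
move=> E; suff : (S t (fun _ => 1%N) + 1 = S (upd (upd t j (false, p)) j.+1 (true, q)) (fun _ => 1%N) + 1)%N by lia.
rewrite E //.
move=> l lk n0 n1; rewrite !lt_upd; try lia.
by rewrite (negbTE n0) (negbTE n1).
Qed.

Lemma window (t0 t' : word) j N : (j.+2 < k)%N ->
  (forall l, (l < k)%N -> l != j -> l != j.+1 -> l != j.+2 -> isV (lt t0 l) = isV (lt t' l)) ->
  (isV (lt t' j) * j + isV (lt t' j.+1) * j.+1 + isV (lt t' j.+2) * j.+2 <
   isV (lt t0 j) * j + isV (lt t0 j.+1) * j.+1 + isV (lt t0 j.+2) * j.+2)%N ->
  (isV (lt t' j) + isV (lt t' j.+1) + isV (lt t' j.+2) = isV (lt t0 j) + isV (lt t0 j.+1) + isV (lt t0 j.+2))%N ->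
  (mu t0 <= N.+1)%N -> count isV t0 = m -> (mu t' <= N)%N /\ count isV t' = m.
Proof.
move=> jk H h1 h2 hm hc.
have E1 := S3 id jk H; have E2 := S3 (fun _ => 1%N) jk H.
rewrite count_S in hc; rewrite count_S mu_S; rewrite mu_S in hm.
rewrite /= !muln1 in E2; rewrite /= in E1; lia.
Qed.

Lemma P3_scal (s : word) i f1 f2 f3 (c : K) (h : ix -> ix -> ix -> K) :
  P3 s i f1 f2 f3 (fun x y z => c * h x y z) = c *: P3 s i f1 f2 f3 h.
Proof.
rewrite /P3 scaler_sumr; apply: eq_bigr => x _; rewrite scaler_sumr; apply: eq_bigr => y _.
rewrite scaler_sumr; apply: eq_bigr => z _; by rewrite scalerA.
Qed.

Lemma P2_sum (s : word) i f1 f2 (e : ix -> K) (g : ix -> ix -> ix -> K) :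
  P2 s i f1 f2 (fun x y => \sum_(r : ix) e r * g r x y) = \sum_(r : ix) e r *: P2 s i f1 f2 (g r).
Proof.
rewrite /P2.
under eq_bigr => x _ do under eq_bigr => y _ do rewrite scaler_suml.
under [RHS]eq_bigr => r _ do rewrite scaler_sumr.
rewrite [RHS]exchange_big /=; apply: eq_bigr => x _.
under [RHS]eq_bigr => r _ do rewrite scaler_sumr.
rewrite [RHS]exchange_big /=; apply: eq_bigr => y _.
by apply: eq_bigr => r _; rewrite scalerA.
Qed.

End Main2.

Lemma lt_upd_ne k (t : k.-tuple letter) j x l : (l < k)%N -> l != j -> lt (upd t j x) l = lt t l.
Proof. by move=> lk ne; rewrite lt_updI // (negbTE ne). Qed.

Lemma mulr_perm (K : comNzRingType) (a b c : K) : a * (b * c) = a * c * b.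
Proof. by rewrite -mulrA (mulrC c). Qed.

Ltac agree_tac := let l := fresh "l" in let lk := fresh "lk" in move=> l lk ? ? ?; rewrite /typ /upd2 !lt_upd_ne //.
Ltac wcomp H := rewrite /typ /upd2 !lt_upd //; simpl_eqs; rewrite ?H /=; lia.

Section Main3.
Variable K : fieldType.
Variable L : BQD K.
Variables m n : nat.
Notation k := (m + n)%N.
Notation word := (k.-tuple letter).
Notation T := (Tdeg K k).
Notation I' := (idealI' L m n).
Local Notation rho := ((bq_q L + (bq_q L)^-1) ^- 2).

Lemma main N : forall (s : word) i f1 f2 h, kind L f1 f2 h -> (i.+1 < k)%N ->
  (mu (typ s i f1 f2) <= N)%N -> count isV (typ s i f1 f2) = m -> Phi L (P2 s i f1 f2 h) \in I'.
Proof.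
elim: N => [|N IH] s i f1 f2 h kd ik hmu cm.
  apply: base => //; apply/existsP => [[j hj]]; have := mu_sw ord0 ord0 hj; lia.
case: (boolP [exists j : 'I_k, isWV (typ s i f1 f2) j]) => [/existsP [[j jk0] wv] | nw]; last exact: base.
simpl in wv; move: (wv) => /andP [/andP [jk wj] vj].
have lt0 : forall l, lt (typ s i f1 f2) l = if l == i.+1 then (f2, ord0) else if l == i then (f1, ord0) else lt s l.
  by move=> l; rewrite /typ /upd2 !lt_upd //; lia.
rewrite lt0 in wj; rewrite lt0 in vj.
case: (boolP ((j.+1 < i) || (i.+1 < j))%N) => [d|nd].
  (* disjoint *)
  have e1 : (j == i.+1) = false by apply/eqP; lia.
  have e2 : (j == i) = false by apply/eqP; lia.
  have e3 : (j.+1 == i.+1) = false by apply/eqP; lia.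
  have e4 : (j.+1 == i) = false by apply/eqP; lia.
  rewrite e1 e2 in wj; rewrite e3 e4 in vj.
  have wvs : isWV s j by rewrite /isWV jk wj vj.
  rewrite (P2_disj L f1 f2 h ik wvs d).
  apply: memv_suml => p _; apply: memv_suml => q _; apply: memvZ; apply: IH => //.
  - have -> : typ (sw s j p q) i f1 f2 = sw (typ s i f1 f2) j p q by rewrite /typ /sw; solve_word.
    by have := mu_sw p q wv; rewrite /sw; lia.
  - have -> : typ (sw s j p q) i f1 f2 = sw (typ s i f1 f2) j p q by rewrite /typ /sw; solve_word.
    by rewrite count_sw.
have H3 : (j.+1 = i) \/ (j = i) \/ (j = i.+1) by move: nd; lia.
case: H3 => [ej|[ej|ej]].
- (* left overlap *)
  subst i; move: wj vj; simpl_eqs => wj vj.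
  have ls : lt s j = (true, (lt s j).2) by move: wj; case: (lt s j) => [[] ?].
  set k0 := (lt s j).2 in ls.
  have jk2 : (j.+2 < k)%N := ik.
  have jk1 : (j.+1 < k)%N by lia.
  have jk0' : (j < k)%N by lia.
  case: kd => [[e1 e2 [l ->]] | [e1 e2 _] | [e1 e2 ->]]; rewrite e1 ?e2 in vj hmu cm *; first last.
  +
    rewrite (P2_ext_left _ _ _ jk2 ls) (swap12 L _ _ _ jk2).
    rewrite (P3_ext _ _ _ _ _ (h2 := fun p q z => sc L * \sum_(r : ix) bq_a L k0 p r * bq_b L r q z)); last first.
      by move=> p q z /=; rewrite ID_cl.
    rewrite P3_split_first linear_sum; apply: memv_suml => p _.
    rewrite (P2_ext _ _ _ _ (h2 := fun q z => \sum_(r : ix) (sc L * bq_a L k0 p r) * bq_b L r q z)); last first.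
      by move=> q z /=; rewrite big_distrr; apply: eq_bigr => r _; exact: mulrA.
    rewrite P2_sum linear_sum; apply: memv_suml => r _; rewrite linearZ; apply: memvZ.
    have [hm hc] := window (t0 := typ s j.+1 false true) (t' := typ (upd s j (false, p)) j.+1 true true) jk2
      ltac:(agree_tac) ltac:(wcomp ls)
      ltac:(wcomp ls) hmu cm.
    apply: IH => //; by apply: Or32; split => //; exists r.
  + by [].
  +
    rewrite (P2_ext_left _ _ _ jk2 ls) (swap12 L _ _ _ jk2) (swap23 L _ _ _ jk2).
    rewrite (P3_ext _ _ _ _ _ (h2 := fun x p q => sc L ^+ 2 * rho * (bq_a L k0 x p * (q == l)%:R)
         + sc L ^+ 2 * rho * (bq_B L k0 l x * bq_c L p q))); last first.
      move=> x p q /=; rewrite -ID_a; apply: eq_bigr => v _; apply: eq_bigr => w _.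
      rewrite (C1 k0 (fun u v0 => sc L * bqG L u v0 x v) (fun u v0 => bq_a L l v0 w)); congr (_ * _).
      by rewrite big_distrr; apply: eq_bigr => v0 _ /=; rewrite mulrA.
    rewrite P3_lin !P3_scal linearD !linearZ /=; apply: memvD; apply: memvZ.
    * rewrite (P3_split_last _ _ _ _ _ jk2) linear_sum; apply: memv_suml => z _.
      rewrite (P2_ext _ _ _ _ (h2 := fun x y => (z == l)%:R * bq_a L k0 x y)); last by move=> x y; rewrite mulrC.
      rewrite P2_scal linearZ; apply: memvZ.
      have [hm hc] := window (t0 := typ s j.+1 false false) (t' := typ (upd s j.+2 (true, z)) j false false) jk2
        ltac:(agree_tac) ltac:(wcomp ls)
        ltac:(wcomp ls) hmu cm.
      apply: IH => //; first by apply: Or31; split => //; exists k0.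
    * rewrite P3_split_first linear_sum; apply: memv_suml => x _.
      rewrite P2_scal linearZ; apply: memvZ.
      have [hm hc] := window (t0 := typ s j.+1 false false) (t' := typ (upd s j (false, x)) j.+1 false true) jk2
        ltac:(agree_tac) ltac:(wcomp ls)
        ltac:(wcomp ls) hmu cm.
      apply: IH => //; by apply: Or33.
- (* j = i : impossible *)
  subst j; move: wj vj; simpl_eqs => wj vj.
  by case: kd => [[e1 e2 _] | [e1 e2 _] | [e1 e2 _]]; move: wj vj; rewrite e1 e2.
- (* right overlap *)
  subst j; move: wj vj; simpl_eqs => wj vj.
  have ls : lt s i.+2 = (false, (lt s i.+2).2) by move: vj; case: (lt s i.+2) => [[] ?].
  set k3 := (lt s i.+2).2 in ls.
  have jk2 : (i.+2 < k)%N := jk.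
  have jk1 : (i.+1 < k)%N by lia.
  have jk0' : (i < k)%N by lia.
  case: kd => [[e1 e2 _] | [e1 e2 [l ->]] | [e1 e2 ->]]; rewrite ?e1 e2 in wj hmu cm *; first by [].
  +
    rewrite (P2_ext_right _ _ _ jk2 ls) (swap23 L _ _ _ jk2) (swap12 L _ _ _ jk2).
    rewrite (P3_ext _ _ _ _ _ (h2 := fun t u q => sc L ^+ 2 * bq_om L ^+ 2 * rho * ((t == l)%:R * bq_b L k3 u q)
         + sc L ^+ 2 * bq_om L ^+ 2 * rho * (bq_c L t u * \sum_(j : ix) bq_D L l j * bq_b L k3 j q))); last first.
      by move=> t u q /=; rewrite -ID_b.
    rewrite P3_lin !P3_scal linearD !linearZ /=; apply: memvD; apply: memvZ.
    * rewrite P3_split_first linear_sum; apply: memv_suml => t _.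
      rewrite P2_scal linearZ; apply: memvZ.
      have [hm hc] := window (t0 := typ s i true true) (t' := typ (upd s i (false, t)) i.+1 true true) jk2
        ltac:(agree_tac) ltac:(wcomp ls)
        ltac:(wcomp ls) hmu cm.
      apply: IH => //; by apply: Or32; split => //; exists k3.
    * rewrite (P3_split_last _ _ _ _ _ jk2) linear_sum; apply: memv_suml => q _.
      rewrite (P2_ext _ _ _ _ (h2 := fun x y => (\sum_(j : ix) bq_D L l j * bq_b L k3 j q) * bq_c L x y)); last by move=> x y; rewrite mulrC.
      rewrite P2_scal linearZ; apply: memvZ.
      have [hm hc] := window (t0 := typ s i true true) (t' := typ (upd s i.+2 (true, q)) i false true) jk2
        ltac:(agree_tac) ltac:(wcomp ls)
        ltac:(wcomp ls) hmu cm.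
      apply: IH => //; by apply: Or33.
  +
    rewrite (P2_ext_right _ _ _ jk2 ls) (swap23 L _ _ _ jk2).
    rewrite (P3_ext _ _ _ _ _ (h2 := fun x p q => sc L * bq_om L ^+ 2 * \sum_(j : ix) bq_a L j x p * bq_b L k3 j q)); last first.
      by move=> x p q /=; rewrite ID_cr.
    rewrite (P3_split_last _ _ _ _ _ jk2) linear_sum; apply: memv_suml => q _.
    rewrite (P2_ext _ _ _ _ (h2 := fun x p => \sum_(j : ix) (sc L * bq_om L ^+ 2 * bq_b L k3 j q) * bq_a L j x p)); last first.
      by move=> x p /=; rewrite big_distrr; apply: eq_bigr => j _; exact: mulr_perm.
    rewrite P2_sum linear_sum; apply: memv_suml => r _; rewrite linearZ; apply: memvZ.
    have [hm hc] := window (t0 := typ s i false true) (t' := typ (upd s i.+2 (true, q)) i false false) jk2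
      ltac:(agree_tac) ltac:(wcomp ls)
      ltac:(wcomp ls) hmu cm.
    apply: IH => //; by apply: Or31; split => //; exists r.
Qed.

End Main3.

Section Final.
Variable K : fieldType.
Variable L : BQD K.
Variables m n : nat.
Notation k := (m + n)%N.
Notation word := (k.-tuple letter).
Notation T := (Tdeg K k).
Notation I' := (idealI' L m n).

Definition Phim (u : T) : T := \sum_(t : word) u t *: (if count isV t == m then phi L t else 0).

Lemma Phim_is_linear : linear Phim.
Proof.
move=> a u v; rewrite /Phim scaler_sumr -big_split; apply: eq_bigr => t _.
by rewrite !ffunE scalerDl scalerA.
Qed.

HB.instance Definition _ := GRing.isLinear.Build K T T *:%R Phim Phim_is_linear.

Lemma Phim_basis t : Phim (basisT K t) = if count isV t == m then phi L t else 0.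
Proof.
rewrite /Phim (bigD1 t) //= big1 ?addr0; first by rewrite ffunE eqxx scale1r.
by move=> t' /negbTE ne; rewrite ffunE ne scale0r.
Qed.

Lemma Phim_P2 (s : word) i f1 f2 h : (i.+1 < k)%N ->
  Phim (P2 s i f1 f2 h) = if count isV (typ s i f1 f2) == m then Phi L (P2 s i f1 f2 h) else 0.
Proof.
move=> ik; rewrite Phi_P2 /P2 linear_sum.
have E : forall x y, Phim (h x y *: basisT K (upd2 s i (f1, x) (f2, y))) =
   (if count isV (typ s i f1 f2) == m then h x y *: phi L (upd2 s i (f1, x) (f2, y)) else 0).
  move=> x y; rewrite linearZ /= Phim_basis.
  rewrite (count_pat (fun l => pat_upd2 s f1 f2 x y l ik)).
  by case: ifP => _; rewrite ?scaler0.
transitivity (\sum_(x : ix) \sum_(y : ix) (if count isV (typ s i f1 f2) == m then h x y *: phi L (upd2 s i (f1, x) (f2, y)) else 0)).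
  by apply: eq_bigr => x _; rewrite linear_sum; apply: eq_bigr => y _; exact: E.
case: ifP => _ //.
by rewrite big1 // => x _; rewrite big1.
Qed.

Lemma Phi_rel_gen (s : word) i k0 i0 : (i.+1 < k)%N ->
  Phi L (basisT K (upd2 s i (true, k0) (false, i0))) +
  (bq_q L + (bq_q L)^-1) *: \sum_(p : ix) \sum_(q : ix) bqG L k0 i0 p q *: Phi L (basisT K (upd2 s i (false, p) (true, q))) = 0.
Proof.
move=> ik.
have wv : isWV (upd2 s i (true, k0) (false, i0)) i.
  by rewrite /isWV ik /upd2 !lt_upd //; try lia; simpl_eqs.
rewrite Phi_basis (phi_step L wv) scaler_sumr -big_split big1 // => p _.
rewrite scaler_sumr -big_split big1 // => q _.
rewrite Phi_basis /cf /upd2 !lt_upd //; try lia; simpl_eqs.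
have -> : sw (upd (upd s i (true, k0)) i.+1 (false, i0)) i p q = upd2 s i (false, p) (true, q).
  rewrite /sw; solve_word.
by rewrite scalerA -scalerDl /sc mulNr addNr scale0r.
Qed.

Lemma Phim_rel (s : word) i k0 i0 : (i.+1 < k)%N -> Phim (placed s i (gen_rel L k0 i0)) = 0.
Proof.
move=> ik; rewrite placed_rel // linearD linearZ linear_sum /=.
have wv : isWV (upd2 s i (true, k0) (false, i0)) i.
  by rewrite /isWV ik /upd2 !lt_upd //; try lia; simpl_eqs.
have cE : forall p q, count isV (upd2 s i (false, p) (true, q)) = count isV (upd2 s i (true, k0) (false, i0)).
  move=> p q; have -> : upd2 s i (false, p) (true, q) = sw (upd2 s i (true, k0) (false, i0)) i p q by rewrite /sw; solve_word.
  exact: count_sw.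
under eq_bigr => p _ do (rewrite linear_sum; under eq_bigr => q _ do rewrite linearZ /= Phim_basis cE).
rewrite Phim_basis; case: ifP => _.
  rewrite -[RHS](Phi_rel_gen s k0 i0 ik) Phi_basis; congr (_ + _ *: _).
  by apply: eq_bigr => p _; apply: eq_bigr => q _; rewrite Phi_basis.
by rewrite add0r big1 ?scaler0 // => p _; rewrite big1 // => q _; rewrite scaler0.
Qed.

End Final.

Section Final2.
Variable K : fieldType.
Variable L : BQD K.
Variables m n : nat.
Notation k := (m + n)%N.
Notation word := (k.-tuple letter).
Notation T := (Tdeg K k).
Notation I' := (idealI' L m n).

Lemma pick_wv (t : word) j : [pick j : 'I_k | isWV t j] = Some j -> isWV t j.
Proof. by case: pickP => // x hx [<-]. Qed.

Lemma pick_none (t : word) : [pick j : 'I_k | isWV t j] = None -> ~~ [exists j : 'I_k, isWV t j].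
Proof. by case: pickP => // H _; apply/existsP => [[j hj]]; move: (H j); rewrite hj. Qed.

Lemma phi_TVTW N : forall t : word, (mu t <= N)%N -> count isV t = m -> phi L t \in TVTW K m n.
Proof.
elim: N => [|N IH] t hmu cm.
  case E: [pick j : 'I_k | isWV t j] => [j|].
    by have := mu_sw ord0 ord0 (pick_wv E); lia.
  rewrite phi_none //; apply: memv_span; apply: map_f.
  by rewrite mem_filter (normal_VWword (pick_none E) cm) mem_enum in_setT.
case E: [pick j : 'I_k | isWV t j] => [j|]; last first.
  rewrite phi_none //; apply: memv_span; apply: map_f.
  by rewrite mem_filter (normal_VWword (pick_none E) cm) mem_enum in_setT.
have wv := pick_wv E.
rewrite (phi_pick L E); apply: memv_suml => p _; apply: memv_suml => q _; apply: memvZ.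
apply: IH; last by rewrite count_sw.
by have := mu_sw p q wv; rewrite /sw; lia.
Qed.

Lemma mem_idealI (s : word) i g : (i.+1 < k)%N -> g \in gens_a L ++ gens_b L ++ gen_c L :: gens_rel L ->
  placed s i g \in idealI L k.
Proof.
move=> ik hg; apply: memv_span; apply/flatten_mapP; exists s; first by rewrite mem_enum in_setT.
apply: allpairs_f => //; rewrite mem_iota; lia.
Qed.

Lemma rel_mem N : forall t : word, (mu t <= N)%N -> basisT K t - phi L t \in idealI L k.
Proof.
elim: N => [|N IH] t hmu.
  case E: [pick j : 'I_k | isWV t j] => [j|].
    by have := mu_sw ord0 ord0 (pick_wv E); lia.
  by rewrite phi_none // subrr mem0v.
case E: [pick j : 'I_k | isWV t j] => [j|]; last by rewrite phi_none // subrr mem0v.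
have wv := pick_wv E.
move: (wv) => /andP [/andP [jk wj] vj].
rewrite (phi_pick L E).
have -> : basisT K t - \sum_(p : ix) \sum_(q : ix) cf L t j p q *: phi L (sw t j p q) =
  (basisT K t - \sum_(p : ix) \sum_(q : ix) cf L t j p q *: basisT K (sw t j p q)) +
  \sum_(p : ix) \sum_(q : ix) cf L t j p q *: (basisT K (sw t j p q) - phi L (sw t j p q)).
  have -> : \sum_(p : ix) \sum_(q : ix) cf L t j p q *: (basisT K (sw t j p q) - phi L (sw t j p q)) =
     \sum_(p : ix) \sum_(q : ix) cf L t j p q *: basisT K (sw t j p q) - \sum_(p : ix) \sum_(q : ix) cf L t j p q *: phi L (sw t j p q).
    rewrite -sumrB; apply: eq_bigr => p _; rewrite -sumrB; apply: eq_bigr => q _; by rewrite scalerBr.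
  by rewrite addrA subrK.
apply: memvD; last first.
  apply: memv_suml => p _; apply: memv_suml => q _; apply: memvZ; apply: IH.
  by have := mu_sw p q wv; rewrite /sw; lia.
have lj : lt t j = (true, (lt t j).2) by move: wj; case: (lt t j) => [[] ?].
have lj1 : lt t j.+1 = (false, (lt t j.+1).2) by move: vj; case: (lt t j.+1) => [[] ?].
have et : upd2 t j (true, (lt t j).2) (false, (lt t j.+1).2) = t.
  by rewrite -lj -lj1 /upd2 !upd_id //; lia.
rewrite (_ : _ - _ = placed t j (gen_rel L (lt t j).2 (lt t j.+1).2)).
  apply: mem_idealI => //.
  by rewrite !mem_cat inE; apply/orP; right; apply/orP; right; apply/orP; right; apply: allpairs_f; rewrite mem_enum in_setT.
rewrite placed_rel // et; congr (_ + _).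
rewrite scaler_sumr -sumrN; apply: eq_bigr => p _.
rewrite scaler_sumr -sumrN; apply: eq_bigr => q _.
by rewrite scalerA /cf /sc mulNr scaleNr opprK.
Qed.

End Final2.

Section Final3.
Variable K : fieldType.
Variable L : BQD K.
Variables m n : nat.
Notation k := (m + n)%N.
Notation word := (k.-tuple letter).
Notation T := (Tdeg K k).
Notation I' := (idealI' L m n).

Lemma I'_sub : (I' <= idealI L k)%VS.
Proof.
rewrite /idealI' !subv_add; apply/andP; split; first (apply/andP; split).
- apply/span_subvP => v /flatten_mapP [s _ /allpairsP [[i g] [/= hi hg ->]]].
  apply: mem_idealI; first by move: hi; rewrite mem_iota; lia.
  by rewrite mem_cat hg.
- apply/span_subvP => v /mapP [s hs ->]; move: hs; rewrite mem_filter => /andP [/andP [/andP [m0 n0] _] _].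
  apply: mem_idealI; first lia.
  by rewrite !mem_cat inE eqxx !orbT.
- apply/span_subvP => v /flatten_mapP [s _ /allpairsP [[i g] [/= hi hg ->]]].
  apply: mem_idealI; first by move: hi; rewrite mem_iota; lia.
  by rewrite !mem_cat hg orbT.
Qed.

Lemma final : exists f : 'End(T),
  induces_quot_iso (Tbideg K m n) (idealI_bideg L m n) (TVTW K m n) I' f.
Proof.
exists (linfun (Phim L (m:=m) (n:=n))).
set f := linfun _.
have fE : forall u, f u = Phim L u by move=> u; rewrite /f lfunE.
have fb : forall t : word, count isV t = m -> f (basisT K t) = phi L t.
  by move=> t ct; rewrite fE Phim_basis ct eqxx.
split.
- rewrite /Tbideg limg_span; apply/span_subvP => v /mapP [u /mapP [t ht ->] ->].
  move: ht; rewrite mem_filter => /andP [/eqP ct _].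
  rewrite fb //; exact: (phi_TVTW L (N := mu t)).
- apply: subv_trans (limgS _ (capvSl _ _)) _.
  rewrite /idealI /ideal_deg limg_span; apply/span_subvP => v /mapP [u /flatten_mapP [s _ /allpairsP [[i g] [/= hi hg ->]]] ->].
  have ik : (i.+1 < k)%N by move: hi; rewrite mem_iota; lia.
  move: hg; rewrite !mem_cat inE => /or4P [/mapP [k0 _ ->] | /mapP [k0 _ ->] | /eqP -> | /allpairsP [[k0 i0] [_ _ ->]]].
  + rewrite fE placed_a // Phim_P2 //; case: ifP => [/eqP c|_]; last exact: mem0v.
    apply: (main (N := mu (typ s i false false))) => //; by apply: Or31; split => //; exists k0.
  + rewrite fE placed_b // Phim_P2 //; case: ifP => [/eqP c|_]; last exact: mem0v.
    apply: (main (N := mu (typ s i true true))) => //; by apply: Or32; split => //; exists k0.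
  + rewrite fE placed_c // Phim_P2 //; case: ifP => [/eqP c|_]; last exact: mem0v.
    apply: (main (N := mu (typ s i false true))) => //; by apply: Or33.
  + by rewrite fE Phim_rel // mem0v.
- move=> x hx hfx; rewrite memv_cap hx andbT.
  have g_sub : ((\1 - f)%VF @: Tbideg K m n <= idealI L k)%VS.
    rewrite limg_span; apply/span_subvP => v /mapP [u /mapP [t ht ->] ->].
    move: ht; rewrite mem_filter => /andP [/eqP ct _].
    rewrite add_lfunE opp_lfunE id_lfunE fb //; exact: (rel_mem L (N := mu t)).
  have h1 := subvP g_sub _ (memv_img (\1 - f)%VF hx).
  rewrite add_lfunE opp_lfunE id_lfunE in h1.
  have h2 := subvP I'_sub _ hfx.
  by rewrite -(subrK (f x) x); apply: memvD.
- apply: subv_trans (addvSl _ _).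
  rewrite /TVTW; apply/span_subvP => v /mapP [t ht ->].
  move: ht; rewrite mem_filter => /andP [vw _].
  have H : forall j, (j < k)%N -> isW (lt t j) = (m <= j)%N.
    move: vw; rewrite VWword_lt => /forallP H j jk; exact: (eqP (H (Ordinal jk))).
  have [nw cm] := VW_normal (leq_addr n m) H.
  have <- : f (basisT K t) = basisT K t.
    rewrite fb // phi_none //; case: pickP => // j hj.
    by move: nw; rewrite negb_exists => /forallP /(_ j); rewrite hj.
  apply: memv_img; apply: memv_span; apply: map_f.
  by rewrite mem_filter cm eqxx mem_enum in_setT.
Qed.

End Final3.


Theorem lemma5p1 (R : realType) (L : BQD R[i]) :
  forall m n : nat, exists f : 'End(Tdeg R[i] (m + n)),
    induces_quot_iso (Tbideg R[i] m n) (idealI_bideg L m n)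
                     (TVTW R[i] m n) (idealI' L m n) f.
Proof. move=> m n; exact: (final L m n). Qed.
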